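(* Let $d\geqslant 2$ and $k\geqslant 1$ be integers and let $a\in\mathbb{Z}_p$. Then (1) $L^d(a)$ is self-similar of index $p^k$, and (2) $L^d(a)$ is strongly hereditarily self-similar of index $p^k$.
   Context: $p$ is any prime. For $d\geqslant 2$ and $a\in\mathbb{Z}_p$, $L^d(a)$ is the $\mathbb{Z}_p$-Lie lattice $\mathbb{Z}_p^d$ with canonical basis $(x_0,\dots,x_{d-1})$ and bracket determined by $[x_i,x_j]=0$ and $[x_0,x_i]=ax_i$ for $i,j\in\{1,\dots,d-1\}$. A virtual endomorphism of a $\mathbb{Z}_p$-Lie lattice $L$ is a homomorphism of algebras $\varphi:M\to L$ with $M\subseteq L$ a finite-index subalgebra, of index $[L:M]$. An ideal $I$ of $L$ is $\varphi$-invariant if it lies in the domain of every power of $\varphi$ and $\varphi(I)\subseteq I$; $\varphi$ is simple if no non-zero ideal is $\varphi$-invariant. $L$ is self-similar of index $p^k$ if it has a simple virtual endomorphism of index $p^k$; it is strongly hereditarily self-similar of index $p^k$ if it is self-similar of index $p^k$ and every non-zero subalgebra of $L$ is self-similar of index $p^k$. *)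

(* Defs.v *)
From HB Require Import structures.
From mathcomp Require Import all_boot all_algebra.
From mathcomp Require Import boolp.
Set Implicit Arguments. Unset Strict Implicit. Unset Printing Implicit Defensive.
Import GRing.Theory.
Local Open Scope ring_scope.

(* An element of Z_p is a coherent sequence (x_n)_n with x_n in [0, q^n) and
   x_n = x_(n+1) mod q^n, where q = maxn p 2 (= p for p prime): the inverse
   limit of the rings Z/p^n Z. *)

Lemma modz_modz_dvd (z M N : int) : dvdz N M -> modz (modz z M) N = modz z N.
Proof.
move/dvdzP=> [c ->].
have -> : modz z N = modz ((divz z (c * N)) * c * N + modz z (c * N)) N.
  by rewrite -mulrA -divz_eq.
by rewrite -(modzDml (divz z (c * N) * c * N) (modz z (c * N)) N) modzMl add0r.
Qed.

Section Zp.
Variable p : nat.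
Definition zp_base : nat := maxn p 2.
Definition zp_mod (n : nat) : int := (zp_base ^ n)%:Z.
Lemma zp_mod_dvd n : dvdz (zp_mod n) (zp_mod n.+1).
Proof. by rewrite /zp_mod expnS PoszM; apply: dvdz_mull; exact: dvdzz. Qed.

Record padic := PAdic {
  pa_seq : nat -> int ;
  pa_coh : forall n, pa_seq n = modz (pa_seq n.+1) (zp_mod n) }.

Lemma padic_eq (x y : padic) : (forall n, pa_seq x n = pa_seq y n) -> x = y.
Proof.
case: x y => [f Hf] [g Hg] /= E.
have efg : f = g by apply: functional_extensionality_dep.
subst g; by rewrite (Prop_irrelevance Hf Hg).
Qed.

Lemma pa_seq_mod (x : padic) n : modz (pa_seq x n) (zp_mod n) = pa_seq x n.
Proof. by have h := pa_coh x n; rewrite {1}h modz_mod -h. Qed.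

Definition lift2_seq (g : int -> int -> int) (x y : padic) (n : nat) : int :=
  modz (g (pa_seq x n) (pa_seq y n)) (zp_mod n).

Lemma lift2_coh (g : int -> int -> int)
  (Hg : forall a b N, modz (g (modz a N) (modz b N)) N = modz (g a b) N)
  (x y : padic) n :
  lift2_seq g x y n = modz (lift2_seq g x y n.+1) (zp_mod n).
Proof.
rewrite /lift2_seq modz_modz_dvd ?zp_mod_dvd // -Hg (pa_coh x) (pa_coh y).
by rewrite Hg.
Qed.

Definition lift2 g Hg x y := PAdic (@lift2_coh g Hg x y).

Definition lift1_seq (g : int -> int) (x : padic) (n : nat) : int :=
  modz (g (pa_seq x n)) (zp_mod n).
Lemma lift1_coh (g : int -> int)
  (Hg : forall a N, modz (g (modz a N)) N = modz (g a) N) (x : padic) n :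
  lift1_seq g x n = modz (lift1_seq g x n.+1) (zp_mod n).
Proof.
by rewrite /lift1_seq modz_modz_dvd ?zp_mod_dvd // -Hg (pa_coh x) Hg.
Qed.
Definition lift1 g Hg x := PAdic (@lift1_coh g Hg x).

Lemma const_coh (c : int) n :
  modz c (zp_mod n) = modz (modz c (zp_mod n.+1)) (zp_mod n).
Proof. by rewrite modz_modz_dvd ?zp_mod_dvd. Qed.
Definition pa_const (c : int) := PAdic (const_coh c).

Definition pa_add := @lift2 (fun a b => a + b) (fun a b N => modzDm a b N).
Definition pa_mul := @lift2 (fun a b => a * b) (fun a b N => modzMm a b N).
Definition pa_opp := @lift1 (fun a => - a) (fun a N => modzNm a N).
Definition pa_zero := pa_const 0.
Definition pa_one := pa_const 1.
End Zp.

HB.instance Definition _ p := gen_eqMixin (padic p).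
HB.instance Definition _ p := gen_choiceMixin (padic p).

Section ZpRing.
Variable p : nat.
Local Notation Zp := (padic p).

Lemma pa_addA : associative (@pa_add p).
Proof.
move=> x y z; apply: padic_eq => n /=; rewrite /lift2_seq /=.
rewrite (modzDmr (pa_seq x n)) (modzDml (pa_seq x n + pa_seq y n)) addrA.
by congr modz.
Qed.
Lemma pa_addC : commutative (@pa_add p).
Proof.
move=> x y; apply: padic_eq => n /=; rewrite /lift2_seq /= addrC.
by congr modz.
Qed.
Lemma pa_add0 : left_id (@pa_zero p) (@pa_add p).
Proof.
move=> x; apply: padic_eq => n /=; rewrite /lift2_seq /=.
rewrite (modzDml 0) add0r; exact: pa_seq_mod.
Qed.
Lemma pa_addN : left_inverse (@pa_zero p) (@pa_opp p) (@pa_add p).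
Proof.
move=> x; apply: padic_eq => n /=; rewrite /lift2_seq /lift1_seq /=.
rewrite (modzDml (- pa_seq x n)) addNr; by congr modz.
Qed.
HB.instance Definition _ := GRing.isZmodule.Build Zp pa_addA pa_addC pa_add0 pa_addN.

Lemma pa_mulA : associative (@pa_mul p).
Proof.
move=> x y z; apply: padic_eq => n /=; rewrite /lift2_seq /=.
rewrite (modzMmr (pa_seq x n)) (modzMml (pa_seq x n * pa_seq y n)) mulrA.
by congr modz.
Qed.
Lemma pa_mulC : commutative (@pa_mul p).
Proof.
move=> x y; apply: padic_eq => n /=; rewrite /lift2_seq /= mulrC.
by congr modz.
Qed.
Lemma pa_mul1 : left_id (@pa_one p) (@pa_mul p).
Proof.
move=> x; apply: padic_eq => n /=; rewrite /lift2_seq /=.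
rewrite (modzMml 1) mul1r; exact: pa_seq_mod.
Qed.
Lemma pa_mulDl : left_distributive (@pa_mul p) (@pa_add p).
Proof.
move=> x y z; apply: padic_eq => n /=; rewrite /lift2_seq /=.
rewrite (modzMml (pa_seq x n + pa_seq y n)) mulrDl.
rewrite -(modzDm (pa_seq x n * pa_seq z n)).
by congr modz.
Qed.
Lemma pa_one_neq0 : (@pa_one p) != (@pa_zero p).
Proof.
apply/eqP => /(congr1 (fun x => pa_seq x 1)) /=.
rewrite /zp_mod expn1 mod0z modz_small //.
apply/andP; split => //; rewrite ltz_nat /zp_base; exact: leq_maxr.
Qed.
HB.instance Definition _ := GRing.Zmodule_isComNzRing.Build Zp
  pa_mulA pa_mulC pa_mul1 pa_mulDl pa_one_neq0.
End ZpRing.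


(* A Z_p-Lie lattice is given by its underlying Z_p-module V and its bracket.
   Subsets of V are predicates V -> Prop. *)
Section LieLattice.
Variables (R : comNzRingType) (V : lmodType R) (br : V -> V -> V).

Definition submodule (S : V -> Prop) : Prop :=
  [/\ S 0, (forall x y, S x -> S y -> S (x + y)) &
      (forall (c : R) x, S x -> S (c *: x))].

Definition subalgebra (S : V -> Prop) : Prop :=
  submodule S /\ (forall x y, S x -> S y -> S (br x y)).

Definition ideal_of (H I : V -> Prop) : Prop :=
  [/\ submodule I, (forall x, I x -> H x) &
      (forall h x, H h -> I x -> I (br h x))].

(* [H : M] = N : M is contained in H and H/M has exactly N elements
   (r is a complete and irredundant set of coset representatives) *)
Definition index_eq (H M : V -> Prop) (N : nat) : Prop :=
  (forall x, M x -> H x) /\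
  (exists r : 'I_N -> V, (forall i, H (r i)) /\
    (forall h, H h -> exists! i : 'I_N, M (h - r i))).

(* phi : M -> H is a virtual endomorphism of the Lie lattice H with domain M
   of index N (phi is a total function; only its values on M matter) *)
Definition virtual_endo (H M : V -> Prop) (phi : V -> V) (N : nat) : Prop :=
  [/\ subalgebra M, index_eq H M N, (forall x, M x -> H (phi x)) &
      [/\ (forall x y, M x -> M y -> phi (x + y) = phi x + phi y),
          (forall (c : R) x, M x -> phi (c *: x) = c *: phi x) &
          (forall x y, M x -> M y -> phi (br x y) = br (phi x) (phi y))]].

(* domain of the n-th power of phi (phi^0 = id on H) *)
Fixpoint dom_pow (H M : V -> Prop) (phi : V -> V) (n : nat) (x : V) : Prop :=
  match n with
  | 0 => H x
  | n'.+1 => M x /\ dom_pow H M phi n' (phi x)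
  end.

Definition invariant_ideal (H M : V -> Prop) (phi : V -> V) (I : V -> Prop) :=
  [/\ ideal_of H I, (forall n x, I x -> dom_pow H M phi n x) &
      (forall x, I x -> I (phi x))].

Definition simple_ve (H M : V -> Prop) (phi : V -> V) : Prop :=
  forall I, invariant_ideal H M phi I -> forall x, I x -> x = 0.

Definition self_similar_sub (H : V -> Prop) (N : nat) : Prop :=
  exists (M : V -> Prop) (phi : V -> V),
    virtual_endo H M phi N /\ simple_ve H M phi.

Definition self_similar (N : nat) : Prop := self_similar_sub (fun _ => True) N.

Definition strongly_hereditarily_self_similar (N : nat) : Prop :=
  self_similar N /\
  forall H : V -> Prop, subalgebra H -> (exists x, H x /\ x <> 0) ->
    self_similar_sub H N.
End LieLattice.

(* L^d(a) = Z_p^d (row vectors), canonical basis x_i = delta_mx 0 i, bracket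
   the bilinear extension of [x_i,x_j] = 0, [x_0,x_i] = a x_i = -[x_i,x_0]
   (i, j in {1..d-1}), [x_0,x_0] = 0. *)
Definition Ld_basis (p d : nat) (i : 'I_d) : 'rV[padic p]_d := delta_mx 0 i.

Definition Ld_table (p d : nat) (a : padic p) (i j : 'I_d) : 'rV[padic p]_d :=
  if (val i == 0%N) && (val j != 0%N) then a *: Ld_basis p j
  else if (val j == 0%N) && (val i != 0%N) then - (a *: Ld_basis p i)
  else 0.

Definition Ld_bracket (p d : nat) (a : padic p) (u v : 'rV[padic p]_d)
  : 'rV[padic p]_d :=
  \sum_(i < d) \sum_(j < d) (u 0 i * v 0 j) *: Ld_table a i j.

(* Main.v *)
Require Import Defs.
From HB Require Import structures.
From mathcomp Require Import all_boot all_algebra.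
From mathcomp Require Import all_order boolp ring.
Set Implicit Arguments. Unset Strict Implicit. Unset Printing Implicit Defensive.
Import GRing.Theory Num.Theory Order.TTheory.
Local Open Scope ring_scope.


Section Padic.
Variable p : nat.
Local Notation R := (padic p).
Local Notation q := (zp_base p).
Local Notation zm := (zp_mod p).

Lemma q_gt1 : (1 < q)%N.
Proof. by rewrite /zp_base leq_max orbT. Qed.

Lemma zm_gt0 n : 0 < zm n.
Proof. by rewrite /zp_mod ltz_nat expn_gt0 (ltn_trans _ q_gt1). Qed.
Lemma zm_neq0 n : zm n != 0.
Proof. by rewrite gt_eqF // zm_gt0. Qed.

Lemma zmD m n : zm (m + n) = zm m * zm n.
Proof. by rewrite /zp_mod expnD PoszM. Qed.

Lemma zm0 : zm 0 = 1. Proof. by []. Qed.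

Lemma seq_range (x : R) n : 0 <= pa_seq x n < zm n.
Proof.
rewrite -pa_seq_mod modz_ge0 ?zm_neq0 //= ltz_pmod //; exact: zm_gt0.
Qed.

Lemma seq_coh_le (x : R) n m : pa_seq x n = modz (pa_seq x (n + m)) (zm n).
Proof.
elim: m => [|m IH]; first by rewrite addn0 pa_seq_mod.
rewrite IH (pa_coh x (n + m)) addnS modz_modz_dvd //.
by rewrite zmD; apply: dvdz_mulr; exact: dvdzz.
Qed.

Lemma seq0 n : pa_seq (0 : R) n = 0.
Proof. by rewrite /= /lift1_seq /= mod0z. Qed.

Lemma seqC c n : pa_seq (pa_const p c) n = modz c (zm n). Proof. by []. Qed.
Lemma seqD (x y : R) n : pa_seq (x + y) n = modz (pa_seq x n + pa_seq y n) (zm n).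
Proof. by []. Qed.
Lemma seqM (x y : R) n : pa_seq (x * y) n = modz (pa_seq x n * pa_seq y n) (zm n).
Proof. by []. Qed.
Lemma seqN (x : R) n : pa_seq (- x) n = modz (- pa_seq x n) (zm n).
Proof. by []. Qed.
Lemma seq1 n : pa_seq (1 : R) n = modz 1 (zm n). Proof. by []. Qed.

Lemma eq0P (x : R) : (forall n, pa_seq x n = 0) -> x = 0.
Proof. by move=> H; apply: padic_eq => n; rewrite H seq0. Qed.

Lemma constM a b : pa_const p a * pa_const p b = pa_const p (a * b).
Proof. by apply: padic_eq => n; rewrite seqM !seqC modzMm. Qed.
Lemma constD a b : pa_const p a + pa_const p b = pa_const p (a + b).
Proof. by apply: padic_eq => n; rewrite seqD !seqC modzDm. Qed.
Lemma constN a : - pa_const p a = pa_const p (- a).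
Proof. by apply: padic_eq => n; rewrite seqN !seqC modzNm. Qed.

Definition Qn n : R := pa_const p (zm n).

Lemma QnD m n : Qn (m + n) = Qn m * Qn n.
Proof. by rewrite /Qn constM zmD. Qed.

Lemma QnX k m : Qn k ^+ m = Qn (k * m).
Proof.
elim: m => [|m IH]; first by rewrite muln0.
by rewrite exprS IH -QnD mulnS.
Qed.

Lemma seq_Qn_mul n y : pa_seq (Qn n * y) n = 0.
Proof. by rewrite seqM seqC modzMml modzMr. Qed.

Lemma seq0_div (x : R) n : pa_seq x n = 0 -> exists y, x = Qn n * y.
Proof.
move=> x0.
have dv m : (zm n %| pa_seq x (n + m))%Z.
  by apply/dvdz_mod0P; rewrite -seq_coh_le.
pose s m := divz (pa_seq x (n + m)) (zm n).
have sK m : s m * zm n = pa_seq x (n + m) by rewrite /s divzK.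
have coh m : s m = modz (s m.+1) (zm m).
  have e : pa_seq x (n + m) = modz (pa_seq x (n + m.+1)) (zm (n + m)).
    by rewrite addnS; exact: pa_coh.
  apply: (mulIf (zm_neq0 n)); rewrite sK mulz_modl ?zm_gt0 // sK.
  by rewrite -zmD (addnC m n) -e.
exists (PAdic coh); apply: padic_eq => N.
rewrite seqM seqC modzMml /= mulrC sK.
by rewrite addnC -seq_coh_le.
Qed.

Lemma Qn_reg n (y : R) : Qn n * y = 0 -> y = 0.
Proof.
move=> H; apply: eq0P => N.
have := congr1 (fun z => pa_seq z (n + N)) H.
rewrite seq0 seqM seqC modzMml => /dvdz_mod0P.
rewrite zmD dvdz_mul2l ?zm_neq0 // => /dvdz_mod0P.
by rewrite addnC -seq_coh_le.
Qed.

Lemma inv_uniq (N X z w : int) : 0 <= z < N -> 0 <= w < N ->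
  modz (X * z) N = modz 1 N -> modz (X * w) N = modz 1 N -> z = w.
Proof.
move=> /andP[z0 zN] /andP[w0 wN] hz hw.
rewrite -(@modz_small z N) ?z0 // -(@modz_small w N) ?w0 //.
transitivity (modz (z * (X * w)) N); first by rewrite -modzMmr hw modzMmr mulr1.
transitivity (modz (w * (X * z)) N); first by congr modz; ring.
by rewrite -modzMmr hz modzMmr mulr1.
Qed.

Lemma qE : prime p -> q = p.
Proof. by move=> pr; rewrite /zp_base; apply/maxn_idPl; exact: prime_gt1. Qed.

Lemma unit_inv (x : R) : prime p -> pa_seq x 1 != 0 -> exists y, x * y = 1.
Proof.
move=> pr x1.
have ex n : exists z, (0 <= z < zm n) /\ modz (pa_seq x n * z) (zm n) = modz 1 (zm n).
  have cp : coprimez (pa_seq x n) (zm n).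
    rewrite /coprimez -/(coprimez _ _) coprimezE /zp_mod absz_nat.
    case: n => [|n]; first by rewrite expn0 coprimen1.
    rewrite coprime_pexpr // coprime_sym prime_coprime ?qE //.
    apply/negP => dq.
    have : (zm 1 %| pa_seq x n.+1)%Z by rewrite dvdzE /zp_mod expn1 absz_nat qE.
    move/dvdz_mod0P => h; move: x1.
    by rewrite (seq_coh_le x 1 n) add1n h eqxx.
  case: (Bezoutz (pa_seq x n) (zm n)) => u [v huv].
  exists (modz u (zm n)); split.
    by rewrite modz_ge0 ?zm_neq0 //= ltz_pmod ?zm_gt0.
  move/eqP: cp => cp; rewrite cp in huv.
  by rewrite modzMmr -huv addrC modzMDl mulrC.
have [s hs] := choice ex.
have coh n : s n = modz (s n.+1) (zm n).
  case: (hs n) => r1 e1; case: (hs n.+1) => r2 e2.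
  apply: (inv_uniq r1 _ e1).
    by rewrite modz_ge0 ?zm_neq0 //= ltz_pmod ?zm_gt0.
  rewrite modzMmr (pa_coh x n) modzMml -(@modz_modz_dvd _ (zm n.+1)); last exact: zp_mod_dvd.
  by rewrite e2 modz_modz_dvd //; exact: zp_mod_dvd.
exists (PAdic coh); apply: padic_eq => n.
by rewrite seqM seq1 /=; case: (hs n).
Qed.

Lemma dec (x : R) : prime p -> x != 0 ->
  exists v u u', x = Qn v * u /\ u * u' = 1.
Proof.
move=> pr nx.
have ex : exists n, pa_seq x n != 0.
  have : ~ (forall n, pa_seq x n = 0) by move=> h; move: nx; rewrite (eq0P h) eqxx.
  by move/existsNP => [n hn]; exists n; apply/eqP.
case: (ex_minnP ex) => n0 hn0 hmin.
case: n0 hn0 hmin => [|v] hn0 hmin.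
  by move: hn0; rewrite -pa_seq_mod zm0 modz1 eqxx.
have xv : pa_seq x v = 0.
  apply/eqP; apply: contraT => h; have := hmin v h; by rewrite ltnn.
have [u xu] := seq0_div xv.
have u1 : pa_seq u 1 != 0.
  apply/negP => /eqP /seq0_div [w uw]; move: hn0.
  by rewrite xu uw mulrA -QnD addn1 seq_Qn_mul eqxx.
have [u' uu'] := unit_inv pr u1.
by exists v, u, u'.
Qed.

Lemma domain (x y : R) : prime p -> x * y = 0 -> x = 0 \/ y = 0.
Proof.
move=> pr xy; case: (eqVneq x 0) => [->|nx]; first by left.
right; have [v [u [u' [xu uu']]]] := dec pr nx.
move: xy; rewrite xu -mulrA => /Qn_reg uy.
by rewrite -[y]mul1r -uu' mulrAC uy mul0r.
Qed.

Lemma ex_min (P : nat -> Prop) : (exists n, P n) ->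
  exists n, P n /\ forall m, P m -> (n <= m)%N.
Proof.
move=> h.
have h' : exists n, `[< P n >] by case: h => n hn; exists n; exact/asboolP.
case: (ex_minnP h') => n /asboolP hn hm; exists n; split => // m /asboolP; exact: hm.
Qed.

Lemma pid (J : R -> Prop) : prime p ->
  (forall x y, J x -> J y -> J (x + y)) -> (forall c x, J x -> J (c * x)) ->
  (exists x, J x /\ x != 0) ->
  exists g, [/\ J g, g != 0 & forall c, J c -> exists e, c = e * g].
Proof.
move=> pr JD JM [x0 [Jx0 nx0]].
pose P v := exists c u u', [/\ J c, c != 0, c = Qn v * u & u * u' = 1].
have : exists v, P v.
  have [v [u [u' [xu uu']]]] := dec pr nx0.
  by exists v, x0, u, u'.
move/ex_min => [v0 [[c0 [u0 [u0' [Jc0 nc0 cu0 uu0]]]] hmin]].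
have Jg : J (Qn v0).
  have -> : Qn v0 = u0' * c0 by rewrite cu0 mulrC -mulrA uu0 mulr1.
  exact: JM.
exists (Qn v0); split => //.
  apply/negP => /eqP h; have : Qn v0 * 1 = 0 by rewrite mulr1.
  by move/Qn_reg/eqP; rewrite oner_eq0.
move=> c Jc; case: (eqVneq c 0) => [->|nc]; first by exists 0; rewrite mul0r.
have [v [u [u' [cu uu']]]] := dec pr nc.
have le : (v0 <= v)%N by apply: hmin; exists c, u, u'.
exists (Qn (v - v0) * u).
by rewrite cu -(subnK le) QnD mulrAC subnK.
Qed.

Lemma pi_inf k c : (0 < k)%N -> (forall m, exists y, c = Qn k ^+ m * y) -> c = 0.
Proof.
move=> k0 h; apply: eq0P => n; have [y cy] := h n.
rewrite cy QnX -(subnKC (leq_pmull n k0)) QnD -mulrA; exact: seq_Qn_mul.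
Qed.

Lemma reps k (c : R) : prime p ->
  exists! i : 'I_(p ^ k), exists y, c - pa_const p (nat_of_ord i)%:Z = Qn k * y.
Proof.
move=> pr.
have small (i : 'I_(p ^ k)) : modz (nat_of_ord i)%:Z (zm k) = (nat_of_ord i)%:Z.
  by apply: modz_small; rewrite /zp_mod qE // ltz_nat ltn_ord.
move: (seq_range c k); case E: (pa_seq c k) => [i|i] /andP[lo hi]; last by [].
have hi' : (i < p ^ k)%N by move: hi; rewrite /zp_mod qE // ltz_nat.
exists (Ordinal hi'); split.
  apply: seq0_div; rewrite seqD seqN seqC modzDmr E.
  by rewrite (small (Ordinal hi')) subrr mod0z.
move=> j [y hy].
have [y' hy'] : exists y', c - pa_const p (i%:Z) = Qn k * y'.
  apply: seq0_div; rewrite seqD seqN seqC modzDmr E.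
  by rewrite (small (Ordinal hi')) subrr mod0z.
have : pa_const p ((nat_of_ord j)%:Z - i%:Z) = Qn k * (y' - y).
  rewrite mulrBr -hy -hy' -constD -constN; ring.
move/(congr1 (fun z => pa_seq z k)); rewrite seq_Qn_mul seqC => /dvdz_mod0P.
rewrite -eqz_mod_dvd (small j) => /eqP.
by rewrite (small (Ordinal hi')) => -[e]; apply: val_inj.
Qed.

End Padic.


Section Lin.
Variables (R : comNzRingType).
Hypothesis dom : forall x y : R, x * y = 0 -> x = 0 \/ y = 0.
Hypothesis pidR : forall J : R -> Prop,
  (forall x y, J x -> J y -> J (x + y)) -> (forall c x, J x -> J (c * x)) ->
  (exists x, J x /\ x != 0) ->
  exists g, [/\ J g, g != 0 & forall c, J c -> exists e, c = e * g].

Section V.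
Variable V : lmodType R.

Definition basis (S : V -> Prop) t (g : 'I_t -> V) :=
  [/\ (forall i, S (g i)),
      (forall x, S x -> exists c : 'I_t -> R, x = \sum_i c i *: g i) &
      (forall c : 'I_t -> R, \sum_i c i *: g i = 0 -> forall i, c i = 0)].

Lemma submod_sum (S : V -> Prop) (I : finType) (F : I -> V) :
  submodule S -> (forall i, S (F i)) -> S (\sum_i F i).
Proof.
case=> S0 SD Ssc FS; apply: (big_ind S) => //.
Qed.

Section F.
Variables (f : V -> R).
Hypothesis fD : forall x y, f (x + y) = f x + f y.
Hypothesis fZ : forall c x, f (c *: x) = c * f x.

Lemma f0 : f 0 = 0.
Proof. by rewrite -(scale0r 0) fZ mul0r. Qed.
Lemma fB x y : f (x - y) = f x - f y.
Proof. by rewrite fD -scaleN1r fZ mulN1r. Qed.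
Lemma fsum (I : finType) (F : I -> V) : f (\sum_i F i) = \sum_i f (F i).
Proof. exact: (big_morph f fD f0). Qed.

Lemma pivot (S : V -> Prop) : submodule S -> (exists x, S x /\ f x != 0) ->
  exists b, [/\ S b, f b != 0 & forall x, S x -> exists e, f x = e * f b].
Proof.
case=> S0 SD Ssc [x0 [Sx0 fx0]].
pose J c := exists x, S x /\ c = f x.
have : exists g, [/\ J g, g != 0 & forall c, J c -> exists e, c = e * g].
  apply: pidR.
  - by move=> _ _ [x [Sx ->]] [y [Sy ->]]; exists (x + y); rewrite fD; split; auto.
  - by move=> c _ [x [Sx ->]]; exists (c *: x); rewrite fZ; split; auto.
  - by exists (f x0); split => //; exists x0.
case=> g [[b [Sb e]] ng hg]; subst g.
exists b; split => // x Sx; apply: hg; by exists x.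
Qed.

Definition ext t (b : V) (g : 'I_t -> V) (i : 'I_t.+1) : V :=
  if unlift ord0 i is Some j then g j else b.

Lemma sum_ext t b (g : 'I_t -> V) (c : 'I_t.+1 -> R) :
  \sum_i c i *: ext b g i = c ord0 *: b + \sum_j c (lift ord0 j) *: g j.
Proof.
rewrite big_ord_recl /ext unlift_none; congr (_ + _).
by apply: eq_bigr => j _; rewrite liftK.
Qed.

Lemma basis_ext (S : V -> Prop) t (g : 'I_t -> V) : submodule S ->
  (exists x, S x /\ f x != 0) -> basis (fun x => S x /\ f x = 0) g ->
  exists g' : 'I_t.+1 -> V, basis S g'.
Proof.
move=> Ssub ex [gS gspan gind].
have [b [Sb fb hb]] := pivot Ssub ex.
case: Ssub => S0 SD Ssc.
exists (ext b g); split.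
- by move=> i; rewrite /ext; case: unliftP => [j _|_] //; case: (gS j).
- move=> x Sx; have [e fe] := hb x Sx.
  have [|c hc] := gspan (x - e *: b).
    split; first by apply: SD => //; rewrite -scaleN1r; apply: (Ssc); exact: Ssc.
    by rewrite fB fZ fe subrr.
  exists (fun i => if unlift ord0 i is Some j then c j else e).
  rewrite sum_ext unlift_none.
  under eq_bigr => j _ do rewrite liftK.
  by rewrite -hc addrC subrK.
- move=> c; rewrite sum_ext => h.
  have c0 : c ord0 = 0.
    have := congr1 f h; rewrite fD fZ fsum f0.
    rewrite big1 ?addr0; last by move=> j _; rewrite fZ; case: (gS j) => _ ->; rewrite mulr0.
    by case/dom => // /eqP; rewrite (negbTE fb).
  move: h; rewrite c0 scale0r add0r => /gind h i.
  by case: (unliftP ord0 i) => [j ->|->].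
Qed.
End F.
End V.

Lemma basis_ex d (S : 'rV[R]_d -> Prop) : submodule S -> exists t (g : 'I_t -> 'rV[R]_d), basis S g.
Proof.
suff H : forall n (S : 'rV[R]_d -> Prop), submodule S ->
    (forall x, S x -> forall i : 'I_d, (n <= i)%N -> x 0 i = 0) ->
    exists t (g : 'I_t -> 'rV[R]_d), basis S g.
  by move=> Ss; apply: (H d) => // x _ i; rewrite leqNgt ltn_ord.
elim=> [|n IH] {}S Ss Sz.
  exists 0%N, (fun _ => 0); split.
  - by move=> [].
  - move=> x Sx; exists (fun _ => 0); rewrite big_ord0.
    by apply/rowP => i; rewrite mxE (Sz x Sx i).
  - by move=> c _ [].
case: (ltnP n d) => nd; last first.
  apply: IH => // x Sx i ni; apply: Sz => //.
  by move: (ltn_ord i); rewrite ltnNge (leq_trans nd ni).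
pose j := Ordinal nd.
pose f (x : 'rV[R]_d) := x 0 j.
have fD x y : f (x + y) = f x + f y by rewrite /f mxE.
have fZ c x : f (c *: x) = c * f x by rewrite /f mxE.
case: (Ss) => S0 SD Ssc.
have S'sub : submodule (fun x => S x /\ f x = 0).
  split.
  - by split => //; rewrite /f mxE.
  - by move=> x y [Sx fx] [Sy fy]; split; [exact: SD | rewrite fD fx fy addr0].
  - by move=> c x [Sx fx]; split; [exact: Ssc | rewrite fZ fx mulr0].
have [t [g bg]] : exists t (g : 'I_t -> 'rV[R]_d), basis (fun x => S x /\ f x = 0) g.
  apply: IH => // x [Sx fx] i ni.
  case: (eqVneq (nat_of_ord i) n) => [e|ne].
    by rewrite -fx /f; congr (x 0 _); apply: val_inj.
  by apply: Sz => //; rewrite ltn_neqAle eq_sym ne.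
have [ex|nex] := pselect (exists x, S x /\ f x != 0).
  have [g' bg'] := basis_ext fD fZ Ss ex bg.
  by exists t.+1, g'.
exists t, g; case: bg => gS gspan gind; split => //.
- by move=> i; case: (gS i).
- move=> x Sx; apply: gspan; split => //.
  have [//|h] := eqVneq (f x) 0; case: nex; by exists x.
Qed.
End Lin.


Section G.
Variables (R : comNzRingType) (V : lmodType R) (f : V -> R) (a pi : R) (N : nat)
  (rho : 'I_N -> R).
Hypothesis fD : forall x y, f (x + y) = f x + f y.
Hypothesis fZ : forall c x, f (c *: x) = c * f x.
Hypothesis P1 : forall y, pi * y = 0 -> y = 0.
Hypothesis P2 : forall c, (forall m, exists y, c = pi ^+ m * y) -> c = 0.
Hypothesis P3 : forall c, exists! i, exists y, c - rho i = pi * y.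

Definition brf (u v : V) := a *: (f u *: v - f v *: u).

Lemma brfE u v : brf u v = (a * f u) *: v - (a * f v) *: u.
Proof. by rewrite /brf scalerBr !scalerA. Qed.

Lemma G (S : V -> Prop) (b0 : V) t (g : 'I_t.+1 -> V) :
  submodule S -> S b0 -> (forall i, S (g i)) ->
  (forall x, S x -> exists e (c : 'I_t.+1 -> R), x = e *: b0 + \sum_i c i *: g i) ->
  (forall e (c : 'I_t.+1 -> R), e *: b0 + \sum_i c i *: g i = 0 ->
      (forall i, c i = 0) /\ e *: b0 = 0) ->
  ((forall x y, S x -> S y -> brf x y = 0) \/ (forall i, a * f (g i) = 0)) ->
  exists M phi, virtual_endo brf S M phi N /\
    (forall I, invariant_ideal brf S M phi I -> forall x, I x -> exists e, x = e *: b0).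
Proof.
move=> Ssub Sb0 Sg span indep hhom.
case: (Ssub) => S0 SD Ssc.
have hex : forall x, exists ec : R * ('I_t.+1 -> R),
    S x -> x = ec.1 *: b0 + \sum_i ec.2 i *: g i.
  move=> x; case: (pselect (S x)) => [Sx|nSx].
    by have [e [c h]] := span x Sx; exists (e, c).
  by exists (0, fun _ => 0).
have [D HD] := choice hex.
pose E x := (D x).1; pose C x := (D x).2.
have uniq x e c : S x -> x = e *: b0 + \sum_i c i *: g i ->
    (forall i, C x i = c i) /\ E x *: b0 = e *: b0.
  move=> Sx h.
  have := indep (E x - e) (fun i => C x i - c i).
  case.
    under eq_bigr => i _ do rewrite scalerBl.
    by rewrite scalerBl sumrB addrACA -opprD -HD // -h subrr.
  move=> h1 h2; split; first by move=> i; apply/eqP; rewrite -subr_eq0 h1.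
  by apply/eqP; rewrite -subr_eq0 -scalerBl h2.
have Sphi_gen e (c : 'I_t.+1 -> R) : S (e *: b0 + \sum_i c i *: g i).
  apply: SD; first exact: Ssc.
  by apply: submod_sum => // i; apply: Ssc.
have CD x y : S x -> S y -> (forall i, C (x + y) i = C x i + C y i) /\
    E (x + y) *: b0 = (E x + E y) *: b0.
  move=> Sx Sy; apply: uniq; first exact: SD.
  rewrite {1}(HD x Sx) {1}(HD y Sy) scalerDl.
  under [X in _ = _ + X]eq_bigr => i _ do rewrite scalerDl.
  by rewrite big_split /= addrACA.
have CZ l x : S x -> (forall i, C (l *: x) i = l * C x i) /\
    E (l *: x) *: b0 = (l * E x) *: b0.
  move=> Sx; apply: uniq; first exact: Ssc.
  rewrite {1}(HD x Sx) scalerDr scaler_sumr -scalerA.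
  by under eq_bigr => i _ do rewrite scalerA.
have Cg j : (forall i, C (g j) i = (i == j)%:R).
  apply: (proj1 (uniq _ 0 _ (Sg j) _)).
  rewrite scale0r add0r (bigD1 j) //= eqxx scale1r big1 ?addr0 //.
  by move=> i /negbTE ->; rewrite scale0r.
have C0 i : C 0 i = 0.
  have := proj1 (CZ 0 0 S0) i; by rewrite scale0r mul0r.
have CB x y : S x -> S y -> forall i, C (x - y) i = C x i - C y i.
  move=> Sx Sy i; rewrite (proj1 (CD _ _ Sx _)); last by rewrite -scaleN1r; apply: Ssc.
  by rewrite -scaleN1r (proj1 (CZ _ _ Sy)) mulN1r.
have hdv : forall c, exists d, (exists y, c = pi * y) -> c = pi * d.
  move=> c; case: (pselect (exists y, c = pi * y)) => [[y hy]|n].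
    by exists y.
  by exists 0.
have [dv Hdv] := choice hdv.
have dvD c c' : (exists y, c = pi * y) -> (exists y, c' = pi * y) ->
    dv (c + c') = dv c + dv c'.
  move=> hc hc'; have hcc' : exists y, c + c' = pi * y.
    by case: hc => y ->; case: hc' => y' ->; exists (y + y'); rewrite mulrDr.
  apply/eqP; rewrite -subr_eq0; apply/eqP; apply: P1.
  by rewrite mulrBr mulrDr -!Hdv // subrr.
have dvZ l c : (exists y, c = pi * y) -> dv (l * c) = l * dv c.
  move=> hc; have hlc : exists y, l * c = pi * y.
    by case: hc => y ->; exists (l * y); rewrite mulrCA.
  apply/eqP; rewrite -subr_eq0; apply/eqP; apply: P1.
  by rewrite mulrBr mulrCA -!Hdv // subrr.
pose M x := S x /\ exists y, C x ord0 = pi * y.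
pose sh x (i : 'I_t.+1) := if (i < t)%N then C x (inord i.+1) else dv (C x ord0).
pose phi x := E x *: b0 + \sum_i sh x i *: g i.
have Sphi x : S (phi x) by apply: Sphi_gen.
have Cphi x : (forall i, C (phi x) i = sh x i) /\ E (phi x) *: b0 = E x *: b0.
  exact: uniq.
have M0 : M 0 by split => //; exists 0; rewrite C0 mulr0.
have MD x y : M x -> M y -> M (x + y).
  move=> [Sx [u hu]] [Sy [v hv]]; split; first exact: SD.
  by exists (u + v); rewrite (proj1 (CD _ _ Sx Sy)) hu hv mulrDr.
have MZ l x : M x -> M (l *: x).
  move=> [Sx [u hu]]; split; first exact: Ssc.
  by exists (l * u); rewrite (proj1 (CZ _ _ Sx)) hu mulrCA.
have phiD x y : M x -> M y -> phi (x + y) = phi x + phi y.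
  move=> [Sx hx] [Sy hy].
  rewrite /phi (proj2 (CD _ _ Sx Sy)) scalerDl addrACA -big_split /=; congr (_ + _).
  apply: eq_bigr => i _; rewrite -scalerDl /sh; case: ifP => _.
    by rewrite (proj1 (CD _ _ Sx Sy)).
  by rewrite (proj1 (CD _ _ Sx Sy)) dvD.
have phiZ l x : M x -> phi (l *: x) = l *: phi x.
  move=> [Sx hx].
  rewrite /phi (proj2 (CZ _ _ Sx)) scalerDr scaler_sumr -scalerA; congr (_ + _).
  apply: eq_bigr => i _; rewrite scalerA /sh; case: ifP => _.
    by rewrite (proj1 (CZ _ _ Sx)).
  by rewrite (proj1 (CZ _ _ Sx)) dvZ.
have MS x : M x -> S x by case.
have Mlin al be x y : M x -> M y -> M (al *: x + be *: y).
  by move=> hx hy; apply: MD; apply: MZ.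
have Mbr x y : M x -> M y -> M (brf x y).
  move=> hx hy; rewrite brfE -scaleNr; exact: Mlin.
have phi0 : phi 0 = 0.
  have := phiD 0 0 M0 M0; rewrite addr0 => h.
  by apply: (@addrI _ (phi 0)); rewrite -h addr0.
exists M, phi; split.
  split.
  - split => //; split => //.
  - split => //.
    exists (fun i => rho i *: g ord0); split; first by move=> i; apply: Ssc.
    move=> h Sh.
    have Crho i : C (h - rho i *: g ord0) ord0 = C h ord0 - rho i.
      rewrite CB //; last exact: Ssc.
      by rewrite (proj1 (CZ _ _ (Sg _))) Cg eqxx mulr1.
    have [i0 [[y hy] hu]] := P3 (C h ord0).
    exists i0; split.
      split; last by exists y; rewrite Crho.
      by apply: SD => //; rewrite -scaleNr; apply: Ssc.
    move=> j [_ [y' hy']]; apply: hu; exists y'; by rewrite -Crho.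
  - by move=> x hx; apply: Sphi.
  - split.
    + exact: phiD.
    + move=> c x hx; exact: phiZ.
    + move=> x y hx hy.
      case: hhom => [ab|ag].
        by rewrite (ab x y (MS _ hx) (MS _ hy)) phi0 (ab _ _ (Sphi x) (Sphi y)).
      have afE z : M z -> a * f (phi z) = a * f z.
        move=> [Sz _].
        have key (e : R) (c : 'I_t.+1 -> R) : a * f (e *: b0 + \sum_i c i *: g i) = a * (e * f b0).
          rewrite fD fZ (fsum fD fZ) mulrDr mulr_sumr big1 ?addr0 // => i _.
          by rewrite fZ mulrCA ag mulr0.
        by rewrite [in RHS](HD z Sz) key /phi key.
      rewrite !brfE -(afE x hx) -(afE y hy).
      rewrite -scaleNr phiD ?phiZ //; try by apply: MZ.
      by rewrite scaleNr.
move=> I [[_ IS _] Idom Iphi] x Ix.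
have IM z : I z -> M z by move=> Iz; case: (Idom 1%N z Iz).
have claim m : forall z, I z -> forall i, exists y, C z i = pi ^+ m * y.
  elim: m => [|m IH] z Iz i.
    by exists (C z i); rewrite expr0 mul1r.
  suff H : forall n z, I z -> forall i : 'I_t.+1, nat_of_ord i = n ->
      exists y, C z i = pi ^+ m.+1 * y.
    exact: (H _ z Iz i erefl).
  elim=> [|n IHn] {}z {}Iz {}i hi.
    have -> : i = ord0 by apply: val_inj.
    have [_ hdz] := IM z Iz.
    have [y hy] := IH (phi z) (Iphi z Iz) ord_max.
    move: hy; rewrite (proj1 (Cphi z)) /sh ltnn => hy.
    by exists y; rewrite (Hdv _ hdz) hy exprS mulrA.
  have nt : (n < t)%N by rewrite -ltnS -hi ltn_ord.
  have nt' : (n < t.+1)%N by rewrite ltnS ltnW.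
  have [y hy] := IHn (phi z) (Iphi z Iz) (inord n) (inordK nt').
  move: hy; rewrite (proj1 (Cphi z)) /sh (inordK nt') nt => hy.
  exists y; rewrite -hy; congr (C z _); apply: val_inj; by rewrite /= inordK ?hi.
exists (E x); rewrite {1}(HD x (IS x Ix)) big1 ?addr0 // => i _.
by move: (P2 (fun m => claim m x Ix i)); rewrite /C => ->; rewrite scale0r.
Qed.
End G.


Lemma sumd (R : comNzRingType) n (F : 'I_n -> R) k : \sum_i (i == k)%:R * F i = F k.
Proof.
rewrite (bigD1 k) //= eqxx mul1r big1 ?addr0 // => i /negbTE ->; by rewrite mul0r.
Qed.

Lemma tabE p d (a : padic p) (i l j : 'I_d.+2) :
  Ld_table a i l 0 j = a * ((i == ord0)%:R * (l == j)%:R * (j != ord0)%:R -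
     (l == ord0)%:R * (i == j)%:R * (j != ord0)%:R).
Proof.
have e0 (x : 'I_d.+2) : (val x == 0%N) = (x == ord0) by [].
rewrite /Ld_table !e0 /Ld_basis.
case: (eqVneq i ord0) => [->|ni]; case: (eqVneq l ord0) => [->|nl] /=.
- rewrite mxE; ring.
- rewrite !mxE /= ; case: (eqVneq l j) => [<-|nlj]; rewrite ?nl /=; ring.
- rewrite !mxE /= ; case: (eqVneq i j) => [<-|nij]; rewrite ?ni /=; ring.
- rewrite mxE; ring.
Qed.

Lemma bracketE p d (a : padic p) (u v : 'rV[padic p]_d.+2) :
  Ld_bracket a u v = brf (fun x : 'rV_d.+2 => x 0 ord0) a u v.
Proof.
apply/rowP => j; rewrite /Ld_bracket /brf !mxE summxE.
set c : padic p := (j != ord0)%:R.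
have step i l : ((u 0 i * v 0 l) *: Ld_table a i l) 0 j =
    (i == ord0)%:R * ((l == j)%:R * (a * c * u 0 i * v 0 l)) -
    (l == ord0)%:R * ((i == j)%:R * (a * c * u 0 i * v 0 l)).
  rewrite mxE tabE /c; ring.
under eq_bigr => i _ do (rewrite summxE; under eq_bigr => l _ do rewrite step; rewrite sumrB).
rewrite sumrB.
under eq_bigr => i _ do rewrite -mulr_sumr sumd.
rewrite sumd exchange_big /=.
under eq_bigr => l _ do rewrite -mulr_sumr sumd.
rewrite sumd.
rewrite /c; case: (eqVneq j ord0) => [->|nj] /=; ring.
Qed.

Lemma sum_delta (R : comNzRingType) (V : lmodType R) n (g : 'I_n -> V) k (X : R) :
  \sum_i ((i == k)%:R * X) *: g i = X *: g k.
Proof.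
rewrite (bigD1 k) //= eqxx mul1r big1 ?addr0 // => i /negbTE ->.
by rewrite mul0r scale0r.
Qed.

Lemma main p d k (a : padic p) : prime p -> (0 < k)%N ->
  forall H, subalgebra (@Ld_bracket p d.+2 a) H -> (exists x, H x /\ x <> 0) ->
  self_similar_sub (@Ld_bracket p d.+2 a) H (p ^ k).
Proof.
move=> pr k0 H.
have -> : @Ld_bracket p d.+2 a = brf (fun x : 'rV_d.+2 => x 0 ord0) a.
  by apply: funext => u; apply: funext => v; exact: bracketE.
move=> [Hsub _] [x0 [Hx0 nx0]].
set f := fun x : 'rV[padic p]_d.+2 => x 0 ord0.
have fD x y : f (x + y) = f x + f y by rewrite /f mxE.
have fZ c x : f (c *: x) = c * f x by rewrite /f mxE.
have dom : forall x y : padic p, x * y = 0 -> x = 0 \/ y = 0.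
  by move=> x y; exact: domain.
have pidR := fun J => @pid p J pr.
have P1 : forall y, Qn p k * y = 0 -> y = 0 by move=> y; exact: Qn_reg.
have P2 : forall c, (forall m, exists y, c = Qn p k ^+ m * y) -> c = 0.
  by move=> c; exact: pi_inf.
have P3 : forall c, exists! i : 'I_(p ^ k), exists y,
    c - pa_const p (nat_of_ord i)%:Z = Qn p k * y.
  by move=> c; exact: reps.
case: (Hsub) => H0 HD Hsc.
case: (pselect (forall x y, H x -> H y -> brf f a x y = 0)) => [ab|nab].
  have [t [g [gS gspan gind]]] := basis_ex dom pidR Hsub.
  case: t g gS gspan gind => [|t] g gS gspan gind.
    by case: (gspan x0 Hx0) => c hc; case: nx0; rewrite hc big_ord0.
  have [] := G fD fZ P1 P2 P3 Hsub H0 gS _ _ (or_introl ab).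
  - by move=> x Hx; have [c hc] := gspan x Hx; exists 0, c; rewrite scaler0 add0r.
  - by move=> e c; rewrite scaler0 add0r => /gind h; split.
  move=> M [phi [ve hs]]; exists M, phi; split => // I hI x Ix.
  by have [e ->] := hs I hI x Ix; rewrite scaler0.
have [x1 [y1 [Hx1 [Hy1 nb]]]] : exists x y, H x /\ H y /\ brf f a x y <> 0.
  case: (pselect (exists x y, H x /\ H y /\ brf f a x y <> 0)) => [//|nex].
  exfalso; apply: nab => x y Hx Hy.
  case: (pselect (brf f a x y = 0)) => // nz; case: nex; by exists x, y.
have an0 : a != 0.
  by apply/eqP => a0; apply: nb; rewrite /brf a0 scale0r.
have fex : exists x, H x /\ f x != 0.
  case: (eqVneq (f x1) 0) => fx1; last by exists x1.
  case: (eqVneq (f y1) 0) => fy1; last by exists y1.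
  by case: nb; rewrite /brf fx1 fy1 !scale0r subrr scaler0.
have [b [Hb fb hb]] := pivot pidR fD fZ Hsub fex.
pose K x := H x /\ f x = 0.
have Ksub : submodule K.
  split.
  - by split => //; rewrite /f mxE.
  - by move=> x y [Sx fx] [Sy fy]; split; [exact: HD | rewrite fD fx fy addr0].
  - by move=> c x [Sx fx]; split; [exact: Hsc | rewrite fZ fx mulr0].
have [t [g [gS gspan gind]]] := basis_ex dom pidR Ksub.
have spanH x : H x -> exists e c, x = e *: b + \sum_i c i *: g i.
  move=> Hx; have [e fe] := hb x Hx.
  have [|c hc] := gspan (x - e *: b).
    split; first by apply: HD => //; rewrite -scaleNr; apply: Hsc.
    by rewrite fD -scaleNr fZ fe mulNr subrr.
  by exists e, c; rewrite -hc addrC subrK.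
have indepH e c : e *: b + \sum_i c i *: g i = 0 -> (forall i, c i = 0) /\ e *: b = 0.
  move=> h.
  have e0 : e = 0.
    have := congr1 f h; rewrite fD fZ (fsum fD fZ) big1 ?addr0; last first.
      by move=> i _; rewrite fZ; case: (gS i) => _ ->; rewrite mulr0.
    rewrite /f mxE => /dom [//|] /eqP; by rewrite (negbTE fb).
  move: h; rewrite e0 scale0r add0r => /gind h; split => //.
case: t g gS gspan gind spanH indepH => [|t] g gS gspan gind spanH indepH.
  exfalso; apply: nb.
  have [e1 [c1 ->]] := spanH x1 Hx1; have [e2 [c2 ->]] := spanH y1 Hy1.
  rewrite !big_ord0 !addr0 /brf !fZ !scalerA -scalerBl.
  by rewrite (_ : e1 * f b * e2 - e2 * f b * e1 = 0) ?scale0r ?scaler0 //; ring.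
have gH i : H (g i) by case: (gS i).
have [] := G (a:=a) fD fZ P1 P2 P3 Hsub Hb gH spanH indepH _.
  by right => i; case: (gS i) => _ ->; rewrite mulr0.
move=> M [phi [ve hs]]; exists M, phi; split => // I hI x Ix.
have [e xe] := hs I hI x Ix.
case: (hI) => [[_ IH Iid] _ _].
have Iy := Iid (g ord0) x (gH ord0) Ix.
have [e' ye'] := hs I hI _ Iy.
move: ye'; rewrite brfE xe fZ (proj2 (gS ord0)) mulr0 scale0r add0r => ye'.
have [hc _] : (forall i : 'I_t.+1, (i == ord0)%:R * (a * (e * f b)) = 0) /\ e' *: b = 0.
  by apply: indepH; rewrite sum_delta -ye' addNr.
have := hc ord0; rewrite eqxx mul1r => h0.
have e0 : e = 0.
  case: (dom _ _ h0) => [/eqP|h1]; first by rewrite (negbTE an0).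
  by case: (dom _ _ h1) => [//|/eqP]; rewrite (negbTE fb).
by rewrite e0 scale0r.
Qed.

Local Close Scope ring_scope.

Theorem proposition1p40 (p d k : nat) (a : padic p) :
  prime p -> (2 <= d)%N -> (1 <= k)%N ->
  self_similar (@Ld_bracket p d a) (p ^ k) /\
  strongly_hereditarily_self_similar (@Ld_bracket p d a) (p ^ k).
Proof.
move=> pr hd hk; case: d hd => [|[|d]] // _.
have key := @main p d k a pr hk.
have top : self_similar (@Ld_bracket p d.+2 a) (p ^ k).
  apply: key; first by split; [split|].
  exists (delta_mx ord0 ord0 : 'rV[padic p]_d.+2); split => //.
  move/matrixP/(_ ord0 ord0); rewrite !mxE eqxx /= => /eqP.
  by rewrite GRing.oner_eq0.
by split => //; split => // H Hs Hne; exact: key.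
Qed.
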